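(* Let $\Phi$ be an Orlicz function and $p$ a lattice norm on $\mathbb{R}^2$ with $p((1,0))=1$. Then the functional $$\|x\|_{\Phi,p}=\inf_{k>0}\frac1k\,p\big((1,I_\Phi(kx))\big),\qquad x\in L^\Phi(\mu),$$ is a norm on $L^\Phi(\mu)$.
   Context: $(\Omega,\Sigma,\mu)$ is a $\sigma$-finite complete measure space and $L^0$ denotes the space of (classes of $\mu$-a.e. equal) real-valued $\Sigma$-measurable functions on $\Omega$. An Orlicz function is a function $\Phi:\mathbb{R}\to[0,\infty)$ which is convex, even, vanishes at $0$ and is not identically zero. For $x\in L^0$, $I_\Phi(x)=\int_\Omega\Phi(x(t))\,d\mu\in[0,+\infty]$. The Orlicz space is $L^\Phi(\mu)=\{x\in L^0: I_\Phi(\lambda x)<\infty\text{ for some }\lambda>0\}$. A lattice norm on $\mathbb{R}^2$ is a norm $p$ such that $p((u,v))\le p((u',v'))$ whenever $|u|\le|u'|$, $|v|\le|v'|$. In the formula for $\|x\|_{\Phi,p}$ the convention $p((1,+\infty))=+\infty$ is used. *)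

(* Defs.v *)
From HB Require Import structures.
From mathcomp Require Import all_boot all_order all_algebra.
From mathcomp Require Import all_classical all_reals all_analysis.
Set Implicit Arguments. Unset Strict Implicit. Unset Printing Implicit Defensive.
Import Order.TTheory GRing.Theory Num.Theory.
Local Open Scope classical_set_scope.
Local Open Scope ring_scope.

Definition orlicz_function (R : realType) (Phi : R -> R) : Prop :=
  [/\ (forall u, 0 <= Phi u),
      (forall u v (t : R), 0 <= t -> t <= 1 ->
          Phi (t * u + (1 - t) * v) <= t * Phi u + (1 - t) * Phi v),
      (forall u, Phi (- u) = Phi u),
      Phi 0 = 0 &
      exists u, Phi u != 0].

Definition lattice_norm (R : realType) (p : R * R -> R) : Prop :=
  [/\ (forall w, p w = 0 -> w = (0, 0)),
      (forall (a : R) w, p (a * w.1, a * w.2) = `|a| * p w),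
      (forall w z, p (w.1 + z.1, w.2 + z.2) <= p w + p z) &
      (forall u v u' v', `|u| <= `|u'| -> `|v| <= `|v'| -> p (u, v) <= p (u', v'))].

Definition I_Phi d (T : measurableType d) (R : realType)
  (mu : {measure set T -> \bar R}) (Phi : R -> R) (x : T -> R) : \bar R :=
  (\int[mu]_t (Phi (x t))%:E)%E.

Definition in_orlicz d (T : measurableType d) (R : realType)
  (mu : {measure set T -> \bar R}) (Phi : R -> R) (x : T -> R) : Prop :=
  measurable_fun setT x /\
  exists lam : R, 0 < lam /\ (I_Phi mu Phi (fun t => (lam * x t)%R) < +oo)%E.

Definition p_one (R : realType) (p : R * R -> R) (s : \bar R) : \bar R :=
  match s with
  | EFin r => (p (1, r))%:E
  | +oo%E => +oo%E
  | -oo%E => -oo%E (* never used: I_Phi >= 0 *)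
  end.

Definition orlicz_p_norm d (T : measurableType d) (R : realType)
  (mu : {measure set T -> \bar R}) (Phi : R -> R) (p : R * R -> R)
  (x : T -> R) : \bar R :=
  ereal_inf [set ((k^-1)%:E * p_one p (I_Phi mu Phi (fun t => (k * x t)%R)))%E
            | k in [set k : R | 0 < k]].

(* Main.v *)
Require Import Defs.
From HB Require Import structures.
From mathcomp Require Import all_boot all_order all_algebra.
From mathcomp Require Import all_classical all_reals all_analysis.
From mathcomp Require Import ring lra measurable_realfun.
Import Order.TTheory GRing.Theory Num.Theory.
Local Open Scope classical_set_scope.
Local Open Scope ring_scope.

Lemma Phi_abs (R : realType) (Phi : R -> R) : orlicz_function Phi ->
  forall u, Phi u = Phi `|u|.
Proof.
case=> _ _ Hev _ _ u; case: (lerP 0 u) => h.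
  by rewrite ger0_norm.
by rewrite ltr0_norm // Hev.
Qed.
Arguments Phi_abs {R Phi}.

Lemma Phi_mono (R : realType) (Phi : R -> R) : orlicz_function Phi ->
  forall u v, 0 <= u -> u <= v -> Phi u <= Phi v.
Proof.
move=> H; case: H => _ Hc Hev _ _ u v u0 uv.
have [v0|v0] := eqVneq v 0.
  subst v.
  by have -> : u = 0 by apply/eqP; rewrite eq_le u0 uv.
have vp : 0 < v by rewrite lt_neqAle eq_sym v0 (le_trans u0 uv).
pose t := (u + v) / (2 * v).
have t0 : 0 <= t by rewrite /t divr_ge0 // ?addr_ge0 ?mulr_ge0 // ltW.
have t1 : t <= 1 by rewrite /t ler_pdivrMr ?mulr_gt0 //; lra.
have := Hc v (- v) t t0 t1.
rewrite Hev.
have -> : t * v + (1 - t) * - v = u.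
  rewrite /t; field; lra.
by have -> : t * Phi v + (1 - t) * Phi v = Phi v by ring.
Qed.
Arguments Phi_mono {R Phi}.

Lemma Phi_scale (R : realType) (Phi : R -> R) : orlicz_function Phi ->
  forall u t, 0 <= t -> t <= 1 -> Phi (t * u) <= t * Phi u.
Proof.
case=> _ Hc _ H0 _ u t t0 t1.
have := Hc u 0 t t0 t1; rewrite H0 !mulr0 !addr0 //.
Qed.
Arguments Phi_scale {R Phi}.

Lemma Phi_meas (R : realType) (Phi : R -> R) : orlicz_function Phi ->
  forall d (T : measurableType d) (f : T -> R), measurable_fun setT f ->
  measurable_fun setT (fun t => Phi (f t)).
Proof.
move=> H d T f mf.
pose h := fun u : R => Phi (Num.max u 0).
have hnd : nondecreasing_fun h.
  move=> u v uv; rewrite /h. apply: (@Phi_mono R Phi H (Num.max u 0) (Num.max v 0)). by rewrite le_max lexx orbT.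
  by rewrite ge_max !le_max uv lexx orbT.
have -> : (fun t => Phi (f t)) = h \o (fun t => `|f t|).
  apply: funext => t; rewrite /h /= (Phi_abs H) (max_idPl _) //.
apply: measurableT_comp; first exact: nondecreasing_measurable.
exact: measurableT_comp.
Qed.
Arguments Phi_meas {R Phi}.

Lemma p_ge0 (R : realType) (p : R * R -> R) : lattice_norm p -> forall w, 0 <= p w.
Proof.
case=> _ Hh _ Hm [u v].
have : p (0 * u, 0 * v) <= p (u, v) by apply: Hm; rewrite mul0r normr0 normr_ge0.
by rewrite (Hh 0 (u, v)) normr0 mul0r.
Qed.
Arguments p_ge0 {R p}.

Lemma p_one_ge1 (R : realType) (p : R * R -> R) : lattice_norm p -> p (1, 0) = 1 ->
  forall r, 1 <= p (1, r).
Proof.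
case=> _ _ _ Hm H10 r; rewrite -{1}H10; apply: Hm => //; rewrite normr0 normr_ge0 //.
Qed.
Arguments p_one_ge1 {R p}.

Lemma p01_gt0 (R : realType) (p : R * R -> R) : lattice_norm p -> 0 < p (0, 1).
Proof.
move=> Hp; rewrite lt_neqAle p_ge0 // andbT; apply/eqP => h.
case: Hp => Hz _ _ _; have := Hz _ (esym h); case=> /eqP; rewrite oner_eq0.
by [].
Qed.
Arguments p01_gt0 {R p}.

Lemma p_one_lin (R : realType) (p : R * R -> R) : lattice_norm p ->
  forall r, `|r| * p (0, 1) <= p (1, r).
Proof.
move=> Hp r; case: (Hp) => _ Hh _ Hm.
rewrite -(Hh r (0, 1)) /=; apply: Hm; rewrite ?mulr0 ?mulr1 ?normr0 ?normr1 //.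
Qed.
Arguments p_one_lin {R p}.

Lemma p_one_conv (R : realType) (p : R * R -> R) : lattice_norm p ->
  forall t r1 r2 s, 0 <= t -> t <= 1 -> 0 <= s -> s <= t * r1 + (1 - t) * r2 ->
  p (1, s) <= t * p (1, r1) + (1 - t) * p (1, r2).
Proof.
move=> Hp t r1 r2 s t0 t1 s0 sle; case: (Hp) => _ Hh Ht Hm.
apply: (@le_trans _ _ (p (1, t * r1 + (1 - t) * r2))).
  apply: Hm => //; rewrite (ger0_norm s0) ger0_norm //; exact: (le_trans s0 sle).
have -> : t * p (1, r1) = p (t * 1, t * r1) by rewrite (Hh t (1, r1)) ger0_norm.
have -> : (1 - t) * p (1, r2) = p ((1 - t) * 1, (1 - t) * r2).
  by rewrite (Hh (1 - t) (1, r2)) ger0_norm // subr_ge0.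
have := Ht (t * 1, t * r1) ((1 - t) * 1, (1 - t) * r2) => /=.
by rewrite mulr1 mulr1 subrKC.
Qed.
Arguments p_one_conv {R p}.

Local Open Scope ereal_scope.

Lemma I_ge0 d (T : measurableType d) (R : realType) (mu : {measure set T -> \bar R})
  (Phi : R -> R) : orlicz_function Phi -> forall f, 0 <= I_Phi mu Phi f.
Proof.
case=> H0 _ _ _ _ f; apply: integral_ge0 => t _; rewrite lee_fin; exact: H0.
Qed.
Arguments I_ge0 {d T R} mu {Phi}.

Lemma I_ae d (T : measurableType d) (R : realType) (mu : {measure set T -> \bar R})
  (Phi : R -> R) : orlicz_function Phi -> forall (x y : T -> R) (k : R),
  measurable_fun setT x -> measurable_fun setT y ->
  {ae mu, forall t, (x t = y t)%R} ->
  I_Phi mu Phi (fun t => (k * x t)%R) = I_Phi mu Phi (fun t => (k * y t)%R).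
Proof.
move=> H x y k mx my hae; rewrite /I_Phi.
apply: ae_eq_integral => //.
- apply/measurable_EFinP; apply: (Phi_meas H); exact: measurable_funM.
- apply/measurable_EFinP; apply: (Phi_meas H); exact: measurable_funM.
- apply: filterS hae => t /= -> _; by [].
Qed.
Arguments I_ae {d T R} mu {Phi}.

Lemma I_conv d (T : measurableType d) (R : realType) (mu : {measure set T -> \bar R})
  (Phi : R -> R) : orlicz_function Phi -> forall (f g h : T -> R) (s : R),
  measurable_fun setT f -> measurable_fun setT g -> measurable_fun setT h ->
  (0 <= s)%R -> (s <= 1)%R -> (forall t, h t = s * f t + (1 - s) * g t)%R ->
  I_Phi mu Phi h <= s%:E * I_Phi mu Phi f + (1 - s)%:E * I_Phi mu Phi g.
Proof.
move=> H f g h s mf mg mh s0 s1 hE.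
have Hc := H; case: Hc => Hnn Hcv _ _ _.
have mPf := Phi_meas H _ _ f mf; have mPg := Phi_meas H _ _ g mg.
have mPh := Phi_meas H _ _ h mh.
have mEf : measurable_fun setT (fun t => (Phi (f t))%:E) by exact/measurable_EFinP.
have mEg : measurable_fun setT (fun t => (Phi (g t))%:E) by exact/measurable_EFinP.
have mEh : measurable_fun setT (fun t => (Phi (h t))%:E) by exact/measurable_EFinP.
have s'0 : (0 <= 1 - s)%R by rewrite subr_ge0.
rewrite /I_Phi -(ge0_integralZl_EFin _ _ _ mEf s0) //; last by move=> t _; rewrite lee_fin.
rewrite -(ge0_integralZl_EFin _ _ _ mEg s'0) //; last by move=> t _; rewrite lee_fin.
rewrite -ge0_integralD //; last 4 first.
- by move=> t _; rewrite mule_ge0 // lee_fin.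
- exact: measurable_funeM.
- by move=> t _; rewrite mule_ge0 // lee_fin.
- exact: measurable_funeM.
apply: ge0_le_integral => //.
- by move=> t _; rewrite lee_fin.
- by apply: emeasurable_funD; exact: measurable_funeM.
- move=> t _; rewrite -!EFinM -EFinD lee_fin hE; exact: Hcv.
Qed.
Arguments I_conv {d T R} mu {Phi}.

Lemma term_ge d (T : measurableType d) (R : realType) (mu : {measure set T -> \bar R})
  (Phi : R -> R) (p : R * R -> R) : orlicz_function Phi -> lattice_norm p -> p (1%R, 0%R) = 1%R ->
  forall (x : T -> R) (k : R), (0 < k)%R ->
  (k^-1)%:E <= (k^-1)%:E * p_one p (I_Phi mu Phi (fun t => (k * x t)%R)).
Proof.
move=> H Hp H10 x k k0.
have := I_ge0 mu H (fun t => (k * x t)%R).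
case: (I_Phi mu Phi _) => [r| |] //= _.
  rewrite -EFinM lee_fin; apply: ler_peMr; [by rewrite invr_ge0 ltW | exact: (p_one_ge1 Hp H10)].
by rewrite mulry gtr0_sg ?invr_gt0 // mul1e leey.
Qed.
Arguments term_ge {d T R} mu {Phi p}.

Lemma norm_ge0 d (T : measurableType d) (R : realType) (mu : {measure set T -> \bar R})
  (Phi : R -> R) (p : R * R -> R) : orlicz_function Phi -> lattice_norm p -> p (1%R, 0%R) = 1%R ->
  forall (x : T -> R), 0 <= orlicz_p_norm mu Phi p x.
Proof.
move=> H Hp H10 x; apply/ereal_infP => y [k /= k0 <-].
apply: le_trans (term_ge mu H Hp H10 x k k0); rewrite lee_fin invr_ge0 ltW //.
Qed.
Arguments norm_ge0 {d T R} mu {Phi p}.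

Lemma norm_fin d (T : measurableType d) (R : realType) (mu : {measure set T -> \bar R})
  (Phi : R -> R) (p : R * R -> R) : orlicz_function Phi -> lattice_norm p -> p (1%R, 0%R) = 1%R ->
  forall (x : T -> R), in_orlicz mu Phi x ->
  exists r : R, (0 <= r)%R /\ orlicz_p_norm mu Phi p x = r%:E.
Proof.
move=> H Hp H10 x [_ [lam [lam0 Ifin]]].
have Hge := norm_ge0 mu H Hp H10 x.
have : orlicz_p_norm mu Phi p x <= (lam^-1)%:E * p_one p (I_Phi mu Phi (fun t => (lam * x t)%R)).
  by apply: ereal_inf_lbound; exists lam.
have := I_ge0 mu H (fun t => (lam * x t)%R).
move: Ifin; case: (I_Phi mu Phi _) => [r| |] //= _ _.
move: Hge; case: (orlicz_p_norm mu Phi p x) => [s| |] //= s0 _.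
by exists s; split => //; rewrite -lee_fin.
Qed.
Arguments norm_fin {d T R} mu {Phi p}.

Lemma norm_zero d (T : measurableType d) (R : realType) (mu : {measure set T -> \bar R})
  (Phi : R -> R) (p : R * R -> R) : orlicz_function Phi -> lattice_norm p -> p (1%R, 0%R) = 1%R ->
  forall (x : T -> R), (forall k, I_Phi mu Phi (fun t => (k * x t)%R) = 0) ->
  orlicz_p_norm mu Phi p x = 0.
Proof.
move=> H Hp H10 x I0; apply/eqP; rewrite eq_le norm_ge0 // andbT.
apply/lee_addgt0Pr => e e0; rewrite add0e.
apply: ge_ereal_inf; exists (((e^-1)^-1)%R%:E * p_one p (I_Phi mu Phi (fun t => (e^-1 * x t)%R))).
  by exists (e^-1)%R => //=; rewrite invr_gt0.
by rewrite I0 /= H10 -EFinM mulr1 invrK.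
Qed.
Arguments norm_zero {d T R} mu {Phi p}.

Lemma norm_ae d (T : measurableType d) (R : realType) (mu : {measure set T -> \bar R})
  (Phi : R -> R) (p : R * R -> R) : orlicz_function Phi ->
  forall (x y : T -> R), measurable_fun setT x -> measurable_fun setT y ->
  {ae mu, forall t, (x t = y t)%R} ->
  orlicz_p_norm mu Phi p x = orlicz_p_norm mu Phi p y.
Proof.
move=> H x y mx my hae; rewrite /orlicz_p_norm; congr (ereal_inf _).
by apply: eq_imagel => k _; rewrite (I_ae mu H x y k mx my hae).
Qed.
Arguments norm_ae {d T R} mu {Phi p}.

Lemma I_scale d (T : measurableType d) (R : realType) (mu : {measure set T -> \bar R})
  (Phi : R -> R) : orlicz_function Phi -> forall (x : T -> R) (a k : R), a != 0%R ->
  I_Phi mu Phi (fun t => (k / `|a| * (a * x t))%R) = I_Phi mu Phi (fun t => (k * x t)%R).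
Proof.
move=> H x a k a0; rewrite /I_Phi; apply: eq_integral => t _; congr EFin.
rewrite (Phi_abs H (k / `|a| * (a * x t))%R) (Phi_abs H (k * x t)%R); congr Phi.
have an : (`|a| != 0)%R by rewrite normr_eq0.
by rewrite !normrM normfV normr_id; field.
Qed.
Arguments I_scale {d T R} mu {Phi}.

Lemma hom_le d (T : measurableType d) (R : realType) (mu : {measure set T -> \bar R})
  (Phi : R -> R) (p : R * R -> R) : orlicz_function Phi ->
  forall (x : T -> R) (a : R), a != 0%R ->
  orlicz_p_norm mu Phi p (fun t => (a * x t)%R) <= `|a|%:E * orlicz_p_norm mu Phi p x.
Proof.
move=> H x a a0; have na0 : (0 < `|a|)%R by rewrite normr_gt0.
rewrite -lee_pdivrMl //; apply/ereal_infP => y [k /= k0 <-].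
rewrite lee_pdivrMl //; apply: ge_ereal_inf.
exists (((k / `|a|)^-1)%R%:E * p_one p (I_Phi mu Phi (fun t => (k / `|a| * (a * x t))%R))).
  by exists (k / `|a|)%R => //=; rewrite divr_gt0.
rewrite (I_scale mu H x a k a0) muleA -EFinM.
have -> : ((k / `|a|)^-1 = `|a| * k^-1)%R by field; rewrite !gt_eqF.
by [].
Qed.
Arguments hom_le {d T R} mu {Phi p}.

Lemma hom_eq d (T : measurableType d) (R : realType) (mu : {measure set T -> \bar R})
  (Phi : R -> R) (p : R * R -> R) : orlicz_function Phi -> lattice_norm p -> p (1%R, 0%R) = 1%R ->
  forall (x : T -> R) (a : R),
  orlicz_p_norm mu Phi p (fun t => (a * x t)%R) = `|a|%:E * orlicz_p_norm mu Phi p x.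
Proof.
move=> H Hp H10 x a; have [->|a0] := eqVneq a 0%R.
  rewrite normr0 mul0e; apply: (norm_zero mu H Hp H10) => k.
  rewrite /I_Phi (eq_integral (cst 0)) ?integral0 // => t _.
  by case: H => _ _ _ P0 _; rewrite mul0r mulr0 P0.
apply/eqP; rewrite eq_le hom_le //=.
have na0 : (0 < `|a|)%R by rewrite normr_gt0.
have := hom_le mu H (fun t => (a * x t)%R) a^-1%R (invr_neq0 a0).
have -> : (fun t => (a^-1 * (a * x t))%R) = x by apply: funext => t; rewrite mulKf.
move=> h; move: (h p); rewrite normfV lee_pdivlMl //.
Qed.
Arguments hom_eq {d T R} mu {Phi p}.

Lemma ege0_cases (R : realType) (u : \bar R) : 0 <= u ->
  (exists r : R, (0 <= r)%R /\ u = r%:E) \/ u = +oo.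
Proof.
case: u => [r| |] //= r0; last by right.
by left; exists r; split => //; rewrite -lee_fin.
Qed.

Lemma tri_core d (T : measurableType d) (R : realType) (mu : {measure set T -> \bar R})
  (Phi : R -> R) (p : R * R -> R) : orlicz_function Phi -> lattice_norm p -> p (1%R, 0%R) = 1%R ->
  forall (x y : T -> R) (k1 k2 : R), measurable_fun setT x -> measurable_fun setT y ->
  (0 < k1)%R -> (0 < k2)%R ->
  orlicz_p_norm mu Phi p (fun t => (x t + y t)%R) <=
  (k1^-1)%:E * p_one p (I_Phi mu Phi (fun t => (k1 * x t)%R)) +
  (k2^-1)%:E * p_one p (I_Phi mu Phi (fun t => (k2 * y t)%R)).
Proof.
move=> H Hp H10 x y k1 k2 mx my k10 k20.
pose k := (k1 * k2 / (k1 + k2))%R.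
pose s := (k2 / (k1 + k2))%R.
have k12 : (0 < k1 + k2)%R by rewrite addr_gt0.
have k0 : (0 < k)%R by rewrite /k divr_gt0 // mulr_gt0.
have s0 : (0 <= s)%R by rewrite /s divr_ge0 // ltW.
have s1 : (s <= 1)%R by rewrite /s ler_pdivrMr // mul1r lerDr ltW.
have hc := I_conv mu H (fun t => (k1 * x t)%R) (fun t => (k2 * y t)%R)
  (fun t => (k * (x t + y t))%R) s
  (measurable_funM (measurable_cst _) mx) (measurable_funM (measurable_cst _) my)
  (measurable_funM (measurable_cst _) (measurable_funD mx my)) s0 s1.
have {hc} hc : I_Phi mu Phi (fun t => (k * (x t + y t))%R) <=
    s%:E * I_Phi mu Phi (fun t => (k1 * x t)%R) +
    (1 - s)%:E * I_Phi mu Phi (fun t => (k2 * y t)%R).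
  apply: hc => t; rewrite /k /s; field; rewrite gt_eqF //.
apply: (@le_trans _ _ ((k^-1)%:E * p_one p (I_Phi mu Phi (fun t => (k * (x t + y t))%R)))).
  by apply: ereal_inf_lbound; exists k.
have Ih0 := I_ge0 mu H (fun t => (k * (x t + y t))%R).
have I10 := I_ge0 mu H (fun t => (k1 * x t)%R).
have I20 := I_ge0 mu H (fun t => (k2 * y t)%R).
have T2 := term_ge mu H Hp H10 y k2 k20.
have T1 := term_ge mu H Hp H10 x k1 k10.
have [[r1 [r10 E1]]|E1] := ege0_cases _ _ I10; last first.
  rewrite E1 /= mulry gtr0_sg ?invr_gt0 // mul1e addye ?leey //.
  apply/negP => /eqP E; move: T2; rewrite E leeNy_eq => /eqP //.
have [[r2 [r20 E2]]|E2] := ege0_cases _ _ I20; last first.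
  rewrite E2 /= mulry gtr0_sg ?invr_gt0 // mul1e addey ?leey //.
  apply/negP => /eqP E; move: T1; rewrite E leeNy_eq => /eqP //.
have [[q [q0 Eq]]|Eq] := ege0_cases _ _ Ih0; last first.
  by move: hc; rewrite Eq E1 E2 -!EFinM -EFinD leye_eq.
move: hc; rewrite Eq E1 E2 /= -!EFinM -!EFinD !lee_fin => hc.
have hp := p_one_conv Hp s r1 r2 q s0 s1 q0 hc.
apply: (@le_trans _ _ (k^-1 * (s * p (1%R, r1) + (1 - s) * p (1%R, r2)))%R).
  by rewrite ler_wpM2l // invr_ge0 ltW.
rewrite le_eqVlt; apply/orP; left; apply/eqP.
rewrite /k /s; field.
by rewrite !gt_eqF.
Qed.
Arguments tri_core {d T R} mu {Phi p}.

Lemma norm0_meas d (T : measurableType d) (R : realType) (mu : {measure set T -> \bar R})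
  (Phi : R -> R) (p : R * R -> R) : orlicz_function Phi -> lattice_norm p -> p (1%R, 0%R) = 1%R ->
  forall (x : T -> R), measurable_fun setT x -> orlicz_p_norm mu Phi p x = 0 ->
  forall (de : R), (0 < de)%R -> mu ((fun t => `|x t|%R) @^-1` `[de, +oo[%classic) = 0.
Proof.
move=> H Hp H10 x mx N0 de de0.
set A := (fun t => `|x t|%R) @^-1` _.
have mabs : measurable_fun setT (fun t => `|x t|%R) by exact: measurableT_comp.
have mA : measurable A by rewrite -(setTI A); apply: mabs => //; exact: measurable_itv.
apply/eqP; apply/negPn/negP => muA.
have muApos : 0 < mu A by rewrite lt_neqAle eq_sym muA measure_ge0.
have [m [m0 mA']] : exists m : R, (0 < m)%R /\ m%:E <= mu A.
  move: muApos; case: (mu A) => [r| |] //= rp.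
    by exists r; split => //; rewrite -lte_fin.
  by exists 1%R; split => //; rewrite leey.
have HH := H; case: HH => Hnn _ Hev P0 [u Pu].
have [u0 [u00 Pu0]] : exists u0 : R, (0 < u0)%R /\ (0 < Phi u0)%R.
  exists `|u|%R; split; last by rewrite -(Phi_abs H) lt_neqAle eq_sym Pu Hnn.
  by rewrite normr_gt0; apply: contra Pu => /eqP ->; rewrite P0.
pose c := p (0%R, 1%R); have c0 : (0 < c)%R := p01_gt0 Hp.
pose eps := Num.min (de / u0)%R (c * de * Phi u0 * m / u0)%R.
have eps0 : (0 < eps)%R.
  by rewrite lt_min !divr_gt0 ?mulr_gt0.
have : eps%:E <= orlicz_p_norm mu Phi p x; last first.
  by rewrite N0 lee_fin leNgt eps0.
apply/ereal_infP => y [k /= k0 <-].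
have Tk := term_ge mu H Hp H10 x k k0.
have [hk|hk] := lerP u0 (k * de)%R; last first.
  apply: le_trans Tk; rewrite lee_fin ge_min; apply/orP; left.
  by rewrite ler_pdivrMr // ler_pdivlMl // ltW.
have kd0 : (0 < k * de)%R by rewrite mulr_gt0.
have mPk : measurable_fun setT (fun t => (Phi (k * x t))%:E).
  by apply/measurable_EFinP; apply: (Phi_meas H); exact: measurable_funM.
have hI : (Phi (k * de) * m)%:E <= I_Phi mu Phi (fun t => (k * x t)%R).
  apply: (@le_trans _ _ (\int[mu]_(t in A) (Phi (k * de))%:E)).
    have := integral_cst mu mA (Phi (k * de))%:E; rewrite /= => ->.
    by rewrite EFinM; apply: lee_wpmul2l => //; rewrite lee_fin Hnn.
  apply: (@le_trans _ _ (\int[mu]_(t in A) (Phi (k * x t))%:E)).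
    apply: ge0_le_integral => //.
    - by move=> t _; rewrite lee_fin.
    - exact: measurable_funS mPk.
    - move=> t; rewrite /A /= in_itv /= andbT => ht; rewrite lee_fin (Phi_abs H (k * x t)%R).
      apply: (Phi_mono H); first exact: ltW.
      by rewrite normrM gtr0_norm // ler_wpM2l // ltW.
  apply: ge0_subset_integral => //; by move=> t _; rewrite lee_fin.
have Pk : (k * de * Phi u0 / u0 <= Phi (k * de))%R.
  have h := Phi_scale H (k * de)%R (u0 / (k * de))%R.
  have : (Phi u0 <= u0 / (k * de) * Phi (k * de))%R.
    have E : (u0 / (k * de) * (k * de) = u0)%R by rewrite mulfVK // gt_eqF.
    rewrite -{1}E; apply: h; first by rewrite divr_ge0 // ltW.
    by rewrite ler_pdivrMr // mul1r.
  move=> h2; rewrite ler_pdivrMr //.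
  have := ler_wpM2l (ltW kd0) h2.
  have -> : (k * de * (u0 / (k * de) * Phi (k * de)) = Phi (k * de) * u0)%R.
    by field; rewrite !gt_eqF.
  by [].
have I0 := I_ge0 mu H (fun t => (k * x t)%R).
have [[r [r0 Er]]|Er] := ege0_cases _ _ I0; last first.
  by rewrite Er /= mulry gtr0_sg ?invr_gt0 // mul1e leey.
rewrite Er /= -EFinM lee_fin.
move: hI; rewrite Er lee_fin => hI.
have hl := p_one_lin Hp r; rewrite ger0_norm // in hl.
apply: (@le_trans _ _ (k^-1 * (r * c))%R); last first.
  by rewrite ler_wpM2l // invr_ge0 ltW.
apply: (@le_trans _ _ (c * de * Phi u0 * m / u0)%R); first by rewrite ge_min lexx orbT.
have ki : (0 <= k^-1)%R by rewrite invr_ge0 ltW.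
apply: (@le_trans _ _ (k^-1 * (Phi (k * de) * m * c))%R); last first.
  apply: ler_wpM2l => //; apply: ler_wpM2r; [exact: ltW | exact: hI].
apply: (@le_trans _ _ (k^-1 * (k * de * Phi u0 / u0 * m * c))%R); last first.
  apply: ler_wpM2l => //; apply: ler_wpM2r; first exact: ltW.
  apply: ler_wpM2r; [exact: ltW | exact: Pk].
rewrite le_eqVlt; apply/orP; left; apply/eqP.
by field; rewrite !gt_eqF.
Qed.
Arguments norm0_meas {d T R} mu {Phi p}.

Lemma norm0_ae d (T : measurableType d) (R : realType) (mu : {measure set T -> \bar R})
  (Phi : R -> R) (p : R * R -> R) : orlicz_function Phi -> lattice_norm p -> p (1%R, 0%R) = 1%R ->
  forall (x : T -> R), measurable_fun setT x -> orlicz_p_norm mu Phi p x = 0 ->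
  {ae mu, forall t, x t = 0%R}.
Proof.
move=> H Hp H10 x mx N0.
pose A := fun n : nat => (fun t => `|x t|%R) @^-1` `[(n.+1%:R^-1)%R, +oo[%classic.
have mabs : measurable_fun setT (fun t => `|x t|%R) by exact: measurableT_comp.
have mA n : measurable (A n).
  by rewrite -(setTI (A n)); apply: mabs => //; exact: measurable_itv.
have nA n : mu.-negligible (A n).
  exists (A n); split => //; apply: (norm0_meas mu H Hp H10 x mx N0).
  by rewrite invr_gt0.
change (mu.-negligible (~` [set t | x t = 0%R])).
apply: (@negligibleS _ _ _ mu (\bigcup_n A n)); last exact: negligible_bigcup nA.
move=> t /= xt0.
have ax : (0 < `|x t|)%R by rewrite normr_gt0; apply/eqP.
exists (Num.truncn (`|x t|^-1))%R => //.
rewrite /A /= in_itv /= andbT ltW //.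
rewrite -invf_plt ?posrE ?ltr0Sn // ?invr_gt0 //.
exact: truncnS_gt.
Qed.
Arguments norm0_ae {d T R} mu {Phi p}.

Local Close Scope ereal_scope.

Theorem theorem2 (d : measure_display) (T : measurableType d) (R : realType)
  (mu : {measure set T -> \bar R})
  (Hsf : sigma_finite setT mu) (Hcomplete : measure_is_complete mu)
  (Phi : R -> R) (p : R * R -> R)
  (HPhi : orlicz_function Phi) (Hp : lattice_norm p) (Hp10 : p (1, 0) = 1) :
  (* well defined on a.e.-classes *)
  (forall x y, in_orlicz mu Phi x -> in_orlicz mu Phi y ->
     {ae mu, forall t, (x t = y t)%R} ->
     orlicz_p_norm mu Phi p x = orlicz_p_norm mu Phi p y) /\
  (* finite and nonnegative *)
  (forall x, in_orlicz mu Phi x ->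
     exists r : R, 0 <= r /\ orlicz_p_norm mu Phi p x = r%:E) /\
  (* definiteness *)
  (forall x, in_orlicz mu Phi x ->
     (orlicz_p_norm mu Phi p x = 0%E <-> {ae mu, forall t, x t = 0%R})) /\
  (* absolute homogeneity *)
  (forall x (a : R), in_orlicz mu Phi x ->
     orlicz_p_norm mu Phi p (fun t => a * x t) = (`|a|%:E * orlicz_p_norm mu Phi p x)%E) /\
  (* triangle inequality *)
  (forall x y, in_orlicz mu Phi x -> in_orlicz mu Phi y ->
     (orlicz_p_norm mu Phi p (fun t => (x t + y t)%R)
       <= orlicz_p_norm mu Phi p x + orlicz_p_norm mu Phi p y)%E).
Proof.
split.
  move=> x y [mx _] [my _] hae; exact: (norm_ae mu HPhi x y mx my hae).
split.
  move=> x hx; exact: (norm_fin mu HPhi Hp Hp10 x hx).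
split.
  move=> x [mx _]; split; first exact: (norm0_ae mu HPhi Hp Hp10 x mx).
  move=> hae; apply: (norm_zero mu HPhi Hp Hp10) => k.
  rewrite (I_ae mu HPhi x (fun _ => 0%R) k mx (measurable_cst _) hae).
  rewrite /I_Phi (eq_integral (cst 0%E)) ?integral0 // => t _.
  by case: HPhi => _ _ _ P0 _; rewrite mulr0 P0.
split.
  move=> x a _; exact: (hom_eq mu HPhi Hp Hp10).
move=> x y hx hy.
have [r1 [r10 E1]] := norm_fin mu HPhi Hp Hp10 x hx.
have [r2 [r20 E2]] := norm_fin mu HPhi Hp Hp10 y hy.
case: hx => mx _; case: hy => my _.
rewrite E1 E2; apply/lee_addgt0Pr => e e0.
have e20 : 0 < e / 2 by rewrite divr_gt0.
have : (orlicz_p_norm mu Phi p x < (r1 + e / 2)%:E)%E by rewrite E1 lte_fin ltrDl.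
move/ereal_inf_lt => [_ [k1 /= k10 <-] lt1].
have : (orlicz_p_norm mu Phi p y < (r2 + e / 2)%:E)%E by rewrite E2 lte_fin ltrDl.
move/ereal_inf_lt => [_ [k2 /= k20 <-] lt2].
apply: (le_trans (tri_core mu HPhi Hp Hp10 x y k1 k2 mx my k10 k20)).
apply: (le_trans (ltW (lteD lt1 lt2))).
rewrite -!EFinD lee_fin; lra.
Qed.
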